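(* Consider the online multiple testing protocol described in the context, and a deterministic online testing algorithm with worst-case threshold sequence $(\tilde\lambda_t)_{t\ge1}$ satisfying $\sum_{t=1}^\infty\tilde\lambda_t\le C<1$. Assume $G(x)\le Lx$ for all $x\in[0,1]$ for some constant $L\ge1$. For an even integer $T\ge2$, let the environment be the deterministic two-phase sequence $Y_t=0$ for $1\le t\le T/2$ and $Y_t=1$ for $T/2<t\le T$. Then for all sufficiently large $T$ and all $a,b>0$, $$\mathbb{E}[\mathrm{Regret}_T(a,b)]\ \ge\ b\cdot\frac T2\left[(1-C)\prod_{t=T/2+1}^{\infty}\big(1-L\tilde\lambda_t\big)_+\right]=\Omega(T),$$ where $(x)_+=\max(x,0)$.
   Context: Online multiple testing protocol: at each round $t$ the environment has a true state $Y_t\in\{0,1\}$ and reveals a $p$-value $p_t\in[0,1]$; conditionally on the states and the past, $p_t\sim\mathrm{Uniform}[0,1]$ if $Y_t=0$ and $p_t\sim G$ if $Y_t=1$, independently across rounds, where $G$ is a continuous strictly increasing CDF on $[0,1]$ with $G(0)=0$, $G(1)=1$. The algorithm picks a threshold $\lambda_t\in[0,1]$ that is a deterministic function of the past history $(p_s,\lambda_s,\delta_s)_{s\le t-1}$ and decides $\delta_t=\mathbf{1}\{p_t\le\lambda_t\}$. The worst-case threshold sequence $\tilde\lambda_t$ is the threshold the algorithm uses at round $t$ when exactly zero rejections have occurred in rounds $1,\dots,t-1$ (so as long as no rejection has been made, $\lambda_t=\tilde\lambda_t$). $V_T=\sum_{t\le T}\mathbf{1}\{Y_t=0,\delta_t=1\}$,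 $M_T=\sum_{t\le T}\mathbf{1}\{Y_t=1,\delta_t=0\}$, and for $a,b>0$, $\mathrm{Regret}_T(a,b)=aV_T+bM_T$. *)

(* Defs.v *)
From HB Require Import structures.
From mathcomp Require Import all_boot all_order all_algebra.
From mathcomp Require Import all_classical all_reals all_analysis.
Set Implicit Arguments. Unset Strict Implicit. Unset Printing Implicit Defensive.
Import Order.TTheory GRing.Theory Num.Theory.
Import numFieldNormedType.Exports.
Local Open Scope ring_scope.

Section Online.
Variable R : realType.

(* One round of history: (p_s, lambda_s, delta_s). *)
Definition round := (R * R * bool)%type.

(* A deterministic online algorithm: at round t (t >= 1) it receives the
   history of rounds 1..t-1 (a list of length t-1) and returns lambda_t. *)
Definition algorithm := nat -> seq round -> R.

Fixpoint history (alg : algorithm) (ps : nat -> R) (n : nat) : seq round :=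
  match n with
  | 0 => [::]
  | n'.+1 =>
      let h := history alg ps n' in
      let l := alg n'.+1 h in
      rcons h (ps n'.+1, l, ps n'.+1 <= l)
  end.

Definition lam (alg : algorithm) (ps : nat -> R) (t : nat) : R :=
  alg t (history alg ps t.-1).
Definition delta (alg : algorithm) (ps : nat -> R) (t : nat) : bool :=
  ps t <= lam alg ps t.

(* Y : nat -> bool, true means state 1 (alternative), false means null *)
Definition V_T (alg : algorithm) (Y : nat -> bool) (ps : nat -> R) (T : nat) : nat :=
  \sum_(1 <= t < T.+1) ((~~ Y t) && delta alg ps t).
Definition M_T (alg : algorithm) (Y : nat -> bool) (ps : nat -> R) (T : nat) : nat :=
  \sum_(1 <= t < T.+1) (Y t && ~~ delta alg ps t).
Definition regret (alg : algorithm) (Y : nat -> bool) (ps : nat -> R) (T : nat)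
  (a b : R) : R :=
  a * (V_T alg Y ps T)%:R + b * (M_T alg Y ps T)%:R.

Definition two_phase (T : nat) (t : nat) : bool := (T %/ 2 < t)%N.

Definition worst_case_thresholds (alg : algorithm) (lt : nat -> R) : Prop :=
  forall ps : nat -> R, (forall s, 0 <= ps s <= 1) ->
  forall t, (1 <= t)%N -> (forall s, (1 <= s < t)%N -> ~~ delta alg ps s) ->
  lam alg ps t = lt t.

(* infinite product prod_{t >= m} (1 - L lt_t)_+ , limit of partial products
   (nonincreasing sequence in [0,1], hence convergent) *)
Definition tail_prod (L : R) (lt : nat -> R) (m : nat) : R :=
  limn (fun n : nat => (\prod_(m <= t < n) Num.max (1 - L * lt t) 0 : R)).

End Online.

(* The probabilistic model for horizon T with deterministic states Y:
   p_1, p_2, ... are independent random variables on (Omega, P),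
   p_t ~ Uniform[0,1] if Y_t = 0 and p_t ~ G if Y_t = 1. *)
Definition pvalue_model (R : realType) (d : measure_display) (Omega : measurableType d)
  (P : probability Omega R) (p : nat -> Omega -> R) (G : R -> R) (Y : nat -> bool) : Prop :=
  [/\ (forall t, measurable_fun setT (p t)),
      (forall n (A : nat -> set R), (forall t, measurable (A t)) ->
         P (\bigcap_(t in [set s : nat | (1 <= s <= n)%N]) (p t @^-1` A t))%classic =
         (\prod_(1 <= t < n.+1) P (p t @^-1` A t)%classic)%E),
      (forall t, (1 <= t)%N -> ~~ Y t -> forall x, 0 <= x <= 1 ->
         P [set w : Omega | p t w <= x]%classic = x%:E) &
      (forall t, (1 <= t)%N -> Y t -> forall x, 0 <= x <= 1 ->
         P [set w : Omega | p t w <= x]%classic = (G x)%:E)].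

(* Main.v *)
Require Import Defs.
From HB Require Import structures.
From mathcomp Require Import all_boot all_order all_algebra.
From mathcomp Require Import all_classical all_reals all_analysis.
Import Order.TTheory GRing.Theory Num.Theory.
Import numFieldNormedType.Exports.
Local Open Scope classical_set_scope.
Local Open Scope ring_scope.
From mathcomp Require Import zify lra.
Lemma int_lb (R : realType) (d : measure_display) (Omega : measurableType d)
  (P : probability Omega R) (f : Omega -> R) (E : set Omega) (k : R) :
  measurable E -> 0 <= k -> (forall w, 0 <= f w) -> (forall w, E w -> k <= f w) ->
  (k%:E * P E <= \int[P]_w (f w)%:E)%E.
Proof.
move=> mE k0 f0 fk.
rewrite -(setIT E) -integral_indic // ; have := integralZl_indic (m:=P) measurableT (fun _ => E) k.
move=> /= <- //; last by move=> kl; exfalso; move: k0; rewrite leNgt kl.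
have h1 : forall x, (0 <= (k * \1_E x)%:E)%E.
  by move=> x; rewrite lee_fin mulr_ge0 // indicE; case: (x \in E).
have h2 : forall x, (0 <= (f x)%:E)%E by move=> x; rewrite lee_fin.
rewrite (ge0_integralTE _ h1) (ge0_integralTE _ h2).
apply: ereal_sup_le => _ [h hle <-]; exists h => // x.
apply: le_trans (hle x) _; rewrite lee_fin indicE.
case: (boolP (x \in E)) => xE /=; first by rewrite mulr1; apply: fk; rewrite -inE.
by rewrite mulr0.
Qed.

Section S.
Variable R : realType.
Implicit Types (alg : algorithm R) (ps : nat -> R).

Lemma history_ext alg ps ps' n : (forall s, (1 <= s <= n)%N -> ps s = ps' s) ->
  history alg ps n = history alg ps' n.
Proof.
elim: n => [//|n IH] H /=.
rewrite IH; last by move=> s /andP[s1 sn]; apply: H; rewrite s1 ltnW.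
by rewrite H // ltnSn.
Qed.

Lemma delta_ext alg ps ps' t : (1 <= t)%N -> (forall s, (1 <= s <= t)%N -> ps s = ps' s) ->
  delta alg ps t = delta alg ps' t.
Proof.
move=> t1 H; rewrite /delta /lam (@history_ext alg ps ps').
  by rewrite H // t1 leqnn.
by move=> s /andP[s1 st]; apply: H; rewrite s1 /=; apply: leq_trans st _; exact: leq_pred.
Qed.

Lemma no_rej alg lt ps T : worst_case_thresholds alg lt -> (forall t, 0 <= lt t) ->
  (forall t, (1 <= t <= T)%N -> lt t < ps t <= 1) ->
  forall t, (1 <= t <= T)%N -> ~~ delta alg ps t.
Proof.
move=> wct lt0 H.
pose ps' s := if (1 <= s <= T)%N then ps s else 1.
have ps'01 : forall s, 0 <= ps' s <= 1.
  move=> s; rewrite /ps'; case: (boolP (1 <= s <= T)%N) => hs; last by rewrite ler01 lexx. case/andP: (H s hs) => a b.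
  by rewrite b andbT; apply: le_trans (ltW a); exact: lt0.
have E : forall t, (1 <= t <= T)%N -> delta alg ps t = delta alg ps' t.
  move=> t /andP[t1 tT]; apply: delta_ext => // s /andP[s1 st].
  by rewrite /ps' s1 (leq_trans st tT).
suff K : forall n, (n <= T)%N -> forall s, (1 <= s <= n)%N -> ~~ delta alg ps' s.
  by move=> t /andP[t1 tT]; rewrite E ?t1 ?tT //; apply: (K T) => //; rewrite t1 tT.
elim => [|n IH] nT s /andP[s1 sn]; first by case: s s1 sn.
rewrite leq_eqVlt in sn; case/orP: sn => [/eqP -> | sn]; last first.
  by apply: IH; [exact: ltnW | rewrite s1 -ltnS].
have hl : lam alg ps' n.+1 = lt n.+1.
  apply: wct => // s' /andP[s'1 s'n]; apply: IH; [exact: ltnW|by rewrite s'1 -ltnS].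
rewrite /delta hl -ltNge /ps' /= nT.
by case/andP: (H n.+1 nT).
Qed.

Lemma sum_tp m n : (\sum_(1 <= t < n.+1) ((m < t)%N : nat))%N = (n - m)%N.
Proof.
elim: n => [|n IH]; first by rewrite big_geq.
rewrite big_nat_recr //= IH.
case: (leqP m n) => mn /=; lia.
Qed.

Lemma regret_lb alg lt ps T a b : worst_case_thresholds alg lt -> (forall t, 0 <= lt t) ->
  0 <= a -> 0 <= b ->
  (forall t, (1 <= t <= T)%N -> lt t < ps t <= 1) ->
  b * (T - T %/ 2)%N%:R <= regret alg (two_phase T) ps T a b.
Proof.
move=> wct lt0 a0 b0 H.
have nr := @no_rej alg lt ps T wct lt0 H.
rewrite /regret -[X in X <= _]add0r; apply: lerD; first by rewrite mulr_ge0.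
rewrite /M_T.
rewrite (eq_big_nat _ _ (F2 := fun t => ((T %/ 2 < t)%N : nat))) ?sum_tp //.
move=> t /andP[t1 tT]; rewrite nr ?andbT //.
by rewrite t1 -ltnS.
Qed.

Lemma regret_ge0 alg ps T a b Y : 0 <= a -> 0 <= b -> 0 <= regret alg Y ps T a b.
Proof. by move=> a0 b0; rewrite /regret addr_ge0 // mulr_ge0. Qed.
End S.
Section S.
Variable R : realType.

Lemma weier (x : nat -> R) m n : (forall t, 0 <= x t <= 1) ->
  0 <= \prod_(m <= t < n) (1 - x t) <= 1 /\
  1 - \sum_(m <= t < n) x t <= \prod_(m <= t < n) (1 - x t).
Proof.
move=> x01; elim: n => [|n [/andP[P0 P1] IH]].
  by rewrite !big_geq // subr0 ler01 lexx.
case: (leqP m n) => mn; last first.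
  by rewrite !big_geq // subr0 ler01 lexx.
rewrite !big_nat_recr //=.
have /andP[x0 x1] := x01 n.
split; first by apply/andP; split; [rewrite mulr_ge0 // subr_ge0 | rewrite mulr_ile1 // ?subr_ge0 // lerBlDr lerDl].
nra.
Qed.

Definition pp (L : R) (lt : nat -> R) m n := \prod_(m <= t < n) Num.max (1 - L * lt t) 0.

Lemma pp_props (L : R) lt m : 1 <= L -> (forall t, 0 <= lt t) ->
  cvgn (pp L lt m) /\ (forall n, 0 <= tail_prod L lt m <= pp L lt m n).
Proof.
move=> L1 lt0.
have f01 : forall t, 0 <= Num.max (1 - L * lt t) 0 <= 1.
  move=> t; rewrite le_max lexx orbT /= ge_max ler01 andbT lerBlDr lerDl.
  by rewrite mulr_ge0 // (le_trans ler01 L1).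
have p0 : forall n, 0 <= pp L lt m n.
  by move=> n; rewrite /pp prodr_ge0 // => t _; case/andP: (f01 t).
have ni : {homo pp L lt m : n k / (n <= k)%N >-> k <= n}.
  move=> n k nk; rewrite /pp.
  case: (leqP m n) => mn; last first.
    rewrite (big_geq (ltnW mn)); apply: prodr_ile1 => t _; exact: f01.
  rewrite (@big_cat_nat _ _ _ n m k) //= -[X in _ <= X]mulr1 ler_wpM2l //.
    by rewrite prodr_ge0 // => t _; case/andP: (f01 t).
  by apply: prodr_ile1 => t _; exact: f01.
have cv : cvgn (pp L lt m).
  apply: nonincreasing_is_cvgn => //; exists 0 => _ [n _ <-]; exact: p0.
split => // n; apply/andP; split.
  by apply: limr_ge => //; near=> k; exact: p0.
exact: nonincreasing_cvgn_ge.
Unshelve. all: by end_near.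
Qed.
Lemma tail_large (L C : R) lt : 1 <= L -> (forall t, 0 <= lt t) ->
  (\sum_(1 <= t <oo) (lt t)%:E <= C%:E)%E ->
  exists m0, forall m, (m0 <= m)%N -> 1/2 <= tail_prod L lt m.
Proof.
move=> L1 lt0 sC.
have L0 : 0 < L by apply: lt_le_trans L1.
have C0 : 0 <= C.
  apply: le_trans (_ : \sum_(1 <= t < 1) lt t <= C); first by rewrite big_geq.
  rewrite -lee_fin -sumEFin; apply: le_trans _ sC; by apply: nneseries_lim_ge => n0 _ _; rewrite lee_fin.
pose S n := \sum_(0 <= t < n) lt t.
have Sn : {homo S : n k / (n <= k)%N >-> n <= k}.
  move=> n k nk; rewrite /S (@big_cat_nat _ _ _ n 0 k) //= lerDl.
  by apply: sumr_ge0.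
have Sb : forall n, S n <= lt 0 + C.
  case=> [|n]; first by rewrite /S big_geq //; apply: addr_ge0.
  rewrite /S big_ltn // lerD2l.
  rewrite -lee_fin -sumEFin; apply: le_trans _ sC; by apply: nneseries_lim_ge => n0 _ _; rewrite lee_fin.
have cS : cvgn S.
  by apply: nondecreasing_is_cvgn => //; exists (lt 0 + C) => _ [n _ <-].
pose eps := (2 * L)^-1.
have eps0 : 0 < eps by rewrite invr_gt0 mulr_gt0.
have := (cvgrPdist_lt _ _).1 cS eps eps0.
case=> N _ HN.
exists N => m Nm.
have hm : limn S - S m < eps.
  have := HN m Nm; rewrite /= ger0_norm //; rewrite subr_ge0.
  exact: nondecreasing_cvgn_le.
have [cv _] := @pp_props L lt m L1 lt0.
apply: limr_ge => //; near=> n.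
rewrite /pp.
case: (leqP n m) => nm; first by rewrite big_geq // ler_pdivrMr // mul1r ler1n.
pose x t := Num.min (L * lt t) 1.
have x01 : forall t, 0 <= x t <= 1.
  by move=> t; rewrite ge_min lexx orbT andbT le_min ler01 mulr_ge0 // ltW.
have ltb : forall t, (m <= t)%N -> L * lt t <= 1/2.
  move=> t mt.
  have : lt t <= limn S - S m.
    apply: le_trans (_ : S t.+1 - S m <= _); last first.
      by rewrite lerD2r; exact: nondecreasing_cvgn_le.
    rewrite /S (@big_cat_nat _ _ _ m 0 t.+1) //=; last exact: leqW.
    rewrite [X in X - _]addrC addrK.
    rewrite big_nat_recr //= lerDr; exact: sumr_ge0.
  move=> h; have : lt t <= eps by apply: le_trans h (ltW hm).
  rewrite /eps invfM => h2.
  rewrite -ler_pdivlMl // mulrC mul1r.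
  by first [exact: h2 | rewrite mulrC].
rewrite (eq_big_nat _ _ (F2 := fun t => 1 - x t)); last first.
  move=> t /andP[mt _]; rewrite /x.
  have := ltb t mt => h; rewrite (_ : Num.min (L * lt t) 1 = L * lt t); last first.
    by apply/min_idPl; apply: le_trans h _; lra.
  apply/max_idPl; rewrite subr_ge0; apply: le_trans h _; lra.
have [_ W] := weier x m n x01.
apply: le_trans W.
have : \sum_(m <= t < n) x t <= 1/2.
  apply: le_trans (_ : \sum_(m <= t < n) L * lt t <= _).
    by apply: ler_sum => t _; rewrite /x ge_min lexx.
  rewrite -mulr_sumr.
  have : \sum_(m <= t < n) lt t <= eps.
    apply: le_trans (ltW hm); apply: le_trans (_ : S n - S m <= _).
      by rewrite /S (@big_cat_nat _ _ _ m 0 n) //= ?(ltnW nm) // [X in X - _]addrC addrK.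
    by rewrite lerD2r; exact: nondecreasing_cvgn_le.
  rewrite /eps => h.
  rewrite -ler_pdivlMl // mulrC mul1r; apply: le_trans h _.
  by rewrite invfM mulrC.
lra.
Unshelve. all: by end_near.
Qed.
End S.
Lemma prob_tail (R : realType) (d : measure_display) (Omega : measurableType d)
  (P : probability Omega R) (q : Omega -> R) (g : R -> R) (x : R) :
  measurable_fun setT q -> g 1 = 1 ->
  (forall y, 0 <= y <= 1 -> P [set w | q w <= y] = (g y)%:E) ->
  0 <= x <= 1 ->
  P (q @^-1` `]x, 1]) = (1 - g x)%:E.
Proof.
move=> mq g1 Hg /andP[x0 x1].
have ms : forall y, measurable [set w | q w <= y].
  move=> y; have := mq measurableT _ (measurable_itv `]-oo, y]).
  rewrite setTI; congr measurable; apply/seteqP; split => w /=; by rewrite in_itv.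
have -> : q @^-1` `]x, 1] = [set w | q w <= 1] `\` [set w | q w <= x].
  apply/seteqP; split => w /=; rewrite in_itv /=.
    by case/andP => a b; split => //; apply/negP; rewrite -ltNge.
  by case=> a /negP; rewrite -ltNge => b; rewrite a b.
rewrite measureD //; last first.
  by apply: le_lt_trans (probability_le1 _ (ms 1)) _; rewrite ltry.
rewrite (_ : _ `&` _ = [set w | q w <= x]); last first.
  apply/seteqP; split => w /=; first by case.
  by move=> h; split => //; apply: le_trans h x1.
have e1 : P [set w | q w <= 1] = (g 1)%:E by apply: Hg; rewrite ler01 lexx.
have e2 : P [set w | q w <= x] = (g x)%:E by apply: Hg; rewrite x0 x1.
change ((P [set w | (q w <= 1)%R] - P [set w | (q w <= x)%R])%E = ((1 - g x)%R)%:E).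
rewrite e1 e2.
rewrite g1.
by rewrite EFinB.
Qed.

Lemma probE_lb (R : realType) (d : measure_display) (Omega : measurableType d)
  (P : probability Omega R) (p : nat -> Omega -> R) (G : R -> R) (T : nat)
  (lt : nat -> R) (C L : R) :
  pvalue_model P p G (two_phase T) -> (forall t, 0 <= lt t <= 1) ->
  (\sum_(1 <= t <oo) (lt t)%:E <= C%:E)%E -> G 1 = 1 ->
  (forall x, 0 <= x <= 1 -> G x <= L * x) -> (forall x, 0 <= x <= 1 -> G x <= 1) ->
  1 <= L -> C < 1 ->
  measurable (\bigcap_(t in [set s | (1 <= s <= T)%N]) (p t @^-1` `]lt t, 1])) /\
  (((1 - C) * tail_prod L lt (T %/ 2).+1)%:E <=
     P (\bigcap_(t in [set s | (1 <= s <= T)%N]) (p t @^-1` `]lt t, 1%R])))%E.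
Proof.
case=> mp ind pu pg lt01 sC G1 GL Gle1 L1 C1.
split.
  apply: bigcap_measurableType => t _.
  by have := mp t measurableT _ (measurable_itv `]lt t, 1]); rewrite setTI.
have -> := ind T (fun t => `]lt t, 1]%classic) (fun t => measurable_itv _).
pose q t := if two_phase T t then 1 - G (lt t) else 1 - lt t.
rewrite (eq_big_nat _ _ (F2 := fun t => (q t)%:E)); last first.
  move=> t /andP[t1 _]; rewrite /q.
  case: (boolP (two_phase T t)) => tp.
    apply: (@prob_tail _ _ _ P (p t) G) => //; first by apply: pg.
  apply: (@prob_tail _ _ _ P (p t) id) => //; first by apply: pu.
rewrite prodEFin lee_fin.
have lt0 : forall t, 0 <= lt t by move=> t; case/andP: (lt01 t).
set m := (T %/ 2)%N.
have mT : (m <= T)%N by rewrite /m leq_div.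
rewrite (@big_cat_nat _ _ _ m.+1 1 T.+1) //=.
have [_ pp2] := @pp_props R L lt m.+1 L1 lt0.
apply: ler_pM.
- by rewrite subr_ge0 ltW.
- by case/andP: (pp2 0%N).
- have [_ W] := @weier R lt 1 m.+1 lt01.
  apply: le_trans _ (le_trans W _).
    rewrite lerD2l lerN2 -lee_fin -sumEFin; apply: le_trans _ sC.
    by apply: nneseries_lim_ge => n0 _ _; rewrite lee_fin.
  rewrite le_eqVlt; apply/orP; left; apply/eqP; apply: eq_big_nat => t /andP[_ tm].
  by rewrite /q /two_phase leqNgt tm.
- case/andP: (pp2 T.+1) => _ h; apply: le_trans h _.
  rewrite /pp big_nat_cond [X in _ <= X]big_nat_cond; apply: ler_prod => t /andP[/andP[mt _] _].
  have /andP[l0 l1] := lt01 t.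
  rewrite /q /two_phase mt le_max lexx orbT /= ge_max subr_ge0 Gle1 ?l0 ?l1 // andbT.
  by rewrite lerD2l lerN2 GL // l0 l1.
Qed.
Theorem theorem2 (R : realType) (alg : algorithm R) (lt : nat -> R) (C L : R)
  (G : R -> R) :
  (forall t h, 0 <= alg t h <= 1) ->
  worst_case_thresholds alg lt ->
  (forall t, 0 <= lt t <= 1) ->
  (\sum_(1 <= t <oo) (lt t)%:E <= C%:E)%E ->
  C < 1 ->
  {within `[0, 1], continuous G} ->
  {in `[0, 1] &, forall x y, x < y -> G x < G y} ->
  G 0 = 0 -> G 1 = 1 ->
  1 <= L ->
  (forall x, 0 <= x <= 1 -> G x <= L * x) ->
  exists c : R, 0 < c /\
  exists T0 : nat, forall T : nat, (T0 <= T)%N -> (2 <= T)%N -> ~~ odd T ->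
  forall (d : measure_display) (Omega : measurableType d)
         (P : probability Omega R) (p : nat -> Omega -> R),
  pvalue_model P p G (two_phase T) ->
  forall a b : R, 0 < a -> 0 < b ->
  let bound := b * (T%:R / 2) * ((1 - C) * tail_prod L lt (T %/ 2).+1) in
  (bound%:E <= \int[P]_w (regret alg (two_phase T) (fun t => p t w) T a b)%:E)%E
  /\ c * b * T%:R <= bound.
Proof.
move=> alg01 wct lt01 sC C1 Gc Ginc G0 G1 L1 GL.
have lt0 : forall t, 0 <= lt t by move=> t; case/andP: (lt01 t).
have Gle1 : forall x, 0 <= x <= 1 -> G x <= 1.
  move=> x /andP[x0 x1]; rewrite -G1.
  case: (ltrP x 1) => h; last by have -> : x = 1 by apply/eqP; rewrite eq_le x1 h.
  apply/ltW/Ginc => //; rewrite in_itv /= ?x0 ?x1 ?ler01 ?lexx //.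
have [m0 Hm0] := @tail_large R L C lt L1 lt0 sC.
exists ((1 - C) / 4); split; first by rewrite divr_gt0 // subr_gt0.
exists (2 * m0)%N => T T0 T2 Tev d Omega P p pm a b a0 b0 bound.
have [mE PE] := @probE_lb R d Omega P p G T lt C L pm lt01 sC G1 GL Gle1 L1 C1.
have Th : T = (T %/ 2 * 2)%N by rewrite divnK // dvdn2 Tev.
have hT : T%:R / 2 = (T %/ 2)%:R :> R.
  by rewrite {1}Th natrM mulfK // pnatr_eq0.
have hT' : (T - T %/ 2)%N = (T %/ 2)%N by lia.
split.
- apply: le_trans (@int_lb R d Omega P _ _ (b * (T - T %/ 2)%:R) mE _ _ _).
  + rewrite /bound EFinM hT hT'; apply: lee_wpmul2l => //.
    by rewrite lee_fin mulr_ge0 // ltW.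
  + by rewrite mulr_ge0 // ltW.
  + by move=> w; apply: regret_ge0; apply: ltW.
    move=> w Ew; apply: (@regret_lb R alg lt) => //; try exact: ltW.
- have tl : 1/2 <= tail_prod L lt (T %/ 2).+1.
    apply: Hm0; lia.
  rewrite /bound.
  have u0 : 0 <= b * T%:R * (1 - C).
    by rewrite mulr_ge0 // ?mulr_ge0 // ?subr_ge0 ?ltW.
  have := ler_wpM2l u0 tl.
  move=> h; nra.
Qed.
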